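(* Let $0<c_1\le 0.2$ and suppose $t\le c_1 n$. Then for all sufficiently large $n$ and all $k\ge 0$, with $L=\sum_{i=1}^x (a_i-t_i)\, d_i\, e^{d_i k/n}$, we have $\frac{L}{n-d_{\max}}\ge 1$.
   Context: Setting: $n$ vertices, a target set $B$ with $|B|=t$, each vertex $v$ has out-degree $d_v$ with $2\le d_{\min}\le d_v\le d_{\max}$ (constants). $d_1,\dots,d_x$ are the distinct out-degrees, $a_i$ is the number of vertices of out-degree $d_i$ (so $\sum_i a_i=n$), and $t_i$ the number of vertices of $B$ of out-degree $d_i$ (so $\sum_i t_i = t$). *)

(* Defs.v *)
From HB Require Import structures.
From mathcomp Require Import all_boot all_order all_algebra.
From mathcomp Require Import reals.
From mathcomp.analysis Require Import sequences exp.
Set Implicit Arguments. Unset Strict Implicit. Unset Printing Implicit Defensive.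
Import Order.TTheory GRing.Theory Num.Theory.
Local Open Scope ring_scope.

(* Vertices are 'I_n; deg v is the out-degree of v; B is the target set. *)

Definition distinct_degs (n : nat) (deg : 'I_n -> nat) : seq nat :=
  undup [seq deg v | v : 'I_n].

Definition deg_count (n : nat) (deg : 'I_n -> nat) (di : nat) : nat :=
  #|[set v : 'I_n | deg v == di]|.

Definition deg_count_in (n : nat) (deg : 'I_n -> nat) (B : {set 'I_n}) (di : nat) : nat :=
  #|[set v in B | deg v == di]|.

Definition Lsum (R : realType) (n : nat) (deg : 'I_n -> nat) (B : {set 'I_n}) (k : R) : R :=
  \sum_(di <- distinct_degs deg)
     ((deg_count deg di)%:R - (deg_count_in deg B di)%:R) * di%:R
       * expR (di%:R * k / n%:R).

(* Main.v *)
Require Import Defs.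
From HB Require Import structures.
From mathcomp Require Import all_boot all_order all_algebra.
From mathcomp Require Import reals.
From mathcomp.analysis Require Import sequences exp.
From mathcomp Require Import lra.
Import Order.TTheory GRing.Theory Num.Theory.
Local Open Scope ring_scope.

Lemma count_part (n : nat) (deg : 'I_n -> nat) (B : {set 'I_n}) :
  (\sum_(di <- distinct_degs deg) #|[set v | v \notin B & deg v == di]| = #|~: B|)%N.
Proof.
rewrite (eq_bigr (fun di => \sum_v (if (v \notin B) && (deg v == di) then 1 else 0))%N); last first.
  by move=> di _; rewrite -sum1_card big_mkcond /=; apply: eq_bigr => v _; rewrite inE.
rewrite exchange_big /= -sum1_card [RHS]big_mkcond /=; apply: eq_bigr => v _.
rewrite inE; case: (v \notin B) => /=; last by rewrite big1.
rewrite -big_mkcond /= sum1_count (eq_count (a2 := pred1 (deg v))); last by move=> x; rewrite /= eq_sym.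
rewrite count_uniq_mem ?undup_uniq //.
by rewrite /distinct_degs mem_undup map_f // mem_enum.
Qed.

Lemma diff_card (n : nat) (deg : 'I_n -> nat) (B : {set 'I_n}) di :
  (deg_count deg di = deg_count_in deg B di + #|[set v | v \notin B & deg v == di]|)%N.
Proof.
rewrite /deg_count /deg_count_in -(cardsID B [set v | deg v == di]).
congr (_ + _)%N; apply: eq_card => v; rewrite !inE //; by rewrite andbC.
Qed.

Theorem lemma7 (R : realType) (c1 : R) (dmin dmax : nat) :
  0 < c1 -> c1 <= 2 / 10 ->
  (2 <= dmin)%N -> (dmin <= dmax)%N ->
  exists N : nat, forall n : nat, (N <= n)%N ->
    forall (deg : 'I_n -> nat) (B : {set 'I_n}),
      (forall v, (dmin <= deg v <= dmax)%N) ->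
      (#|B|%:R <= c1 * n%:R) ->
      forall k : R, 0 <= k ->
        1 <= Lsum deg B k / (n%:R - dmax%:R).
Proof.
move=> c1p c1le hdmin hdd; exists dmax.+1 => n hn deg B hdeg hB k hk.
have hnd : (dmax%:R : R) < n%:R by rewrite ltr_nat.
rewrite ler_pdivlMr ?subr_gt0 // mul1r.
have hL : 2%:R * (#|~: B|)%:R <= Lsum deg B k.
  rewrite -(@count_part n deg) natr_sum mulr_sumr /Lsum big_seq [X in _ <= X]big_seq; apply: ler_sum => di hdi.
  rewrite (@diff_card n deg B di) natrD (addrC (deg_count_in _ _ _)%:R) addrK.
  have hd2 : (2 <= di)%N.
    move: hdi; rewrite /distinct_degs mem_undup => /mapP [v _ ->].
    by case/andP: (hdeg v) => h _; apply: leq_trans hdmin h.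
  have he : 1 <= expR (di%:R * k / n%:R).
    apply: le_trans (expR_ge1Dx _); rewrite lerDl.
    by apply: divr_ge0 => //; apply: mulr_ge0.
  rewrite mulrC -mulrA; apply: ler_wpM2l => //.
  rewrite -[2%:R]mulr1; apply: ler_pM => //; by rewrite ler_nat.
have hc : (#|~: B|%:R : R) = n%:R - #|B|%:R.
  by apply/eqP; rewrite eq_sym subr_eq -natrD addnC cardsC card_ord.
have hB2 : (#|B|%:R : R) <= 2 / 10 * n%:R.
  by apply: le_trans hB _; apply: ler_wpM2r.
have hd0 : (0 : R) <= dmax%:R by [].
rewrite hc in hL.
have hn0 : (0 : R) <= n%:R by [].
move: hL hB2 hd0 hnd hn0.
move: (Lsum deg B k) (n%:R : R) (dmax%:R : R) (#|B|%:R : R) => L x y z.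
move=> h1 h2 h3 h4 h5; clear -h1 h2 h3 h4 h5; lra.
Qed.
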